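(* Let $\mathcal D$ be universal, $\mathrm M=(M,d)\in\mathfrak U_{\mathcal D}$, $A\subseteq M$ finite, and $\mathfrak p_0,\mathfrak p_1,\mathfrak p_2$ Katětov functions of $\mathrm M$ with domain $A$. Then $d_{\min}(\mathfrak p_1,\mathfrak p_2)\le d_{\min}(\mathfrak p_0,\mathfrak p_1)+d_{\min}(\mathfrak p_0,\mathfrak p_2)$.
   Context: $\mathcal D$ is a finite subset of $\mathbb R_{\ge0}$ containing $0$. $\mathfrak U_{\mathcal D}$ is the class of countable homogeneous metric spaces (every isometry between finite subspaces extends to an isometry of the space onto itself) with distance set exactly $\mathcal D$ into which every finite metric space with distances in $\mathcal D$ embeds isometrically; $\mathcal D$ is universal if this class is nonempty. A Katětov function of $\mathrm M$ is a map $\mathfrak t:F\to\mathcal D\setminus\{0\}$, $F\subseteq M$ finite, with $|\mathfrak t(x)-\mathfrak t(y)|\le d(x,y)\le\mathfrak t(x)+\mathfrak t(y)$ for all $x,y\in F$; $\operatorname{orb}(\mathfrak t)=\{y\in M\setminus F: d(y,x)=\mathfrak t(x)\ \forall x\in F\}$. $d_{\min}(\mathfrak s,\mathfrak t)=\min\{d(x,y):x\in\operatorname{orb}(\mathfrak s),y\in\operatorname{orb}(\mathfrak t)\}$. *)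

(* Defs.v *)
From Stdlib Require Import Reals List.
Import ListNotations.
Open Scope R_scope.

Definition distance_set (D : list R) : Prop :=
  In 0 D /\ forall r, In r D -> 0 <= r.

Definition is_metric {M : Type} (d : M -> M -> R) : Prop :=
  (forall x y, d x y = 0 <-> x = y) /\
  (forall x y, d x y = d y x) /\
  (forall x y z, d x z <= d x y + d y z).

Definition countable (M : Type) : Prop :=
  exists f : M -> nat, forall x y, f x = f y -> x = y.

(* Every isometry between finite subspaces (given by its finite graph [ps])
   extends to an isometry of M onto itself. *)
Definition homogeneous {M : Type} (d : M -> M -> R) : Prop :=
  forall ps : list (M * M),
    (forall p q, In p ps -> In q ps -> d (fst p) (fst q) = d (snd p) (snd q)) ->
    exists g : M -> M,
      (forall a b, d (g a) (g b) = d a b) /\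
      (forall b, exists a, g a = b) /\
      (forall p, In p ps -> g (fst p) = snd p).

Definition dist_set_is {M : Type} (d : M -> M -> R) (D : list R) : Prop :=
  (forall x y, In (d x y) D) /\ (forall r, In r D -> exists x y, d x y = r).

Definition finite_metric_D (D : list R) (n : nat) (e : nat -> nat -> R) : Prop :=
  (forall i j, (i < n)%nat -> (j < n)%nat -> (e i j = 0 <-> i = j)) /\
  (forall i j, (i < n)%nat -> (j < n)%nat -> e i j = e j i) /\
  (forall i j k, (i < n)%nat -> (j < n)%nat -> (k < n)%nat -> e i k <= e i j + e j k) /\
  (forall i j, (i < n)%nat -> (j < n)%nat -> In (e i j) D).

Definition D_universal_space {M : Type} (d : M -> M -> R) (D : list R) : Prop :=
  forall n e, finite_metric_D D n e ->
    exists f : nat -> M, forall i j, (i < n)%nat -> (j < n)%nat -> d (f i) (f j) = e i j.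

Definition in_U_D {M : Type} (d : M -> M -> R) (D : list R) : Prop :=
  is_metric d /\ countable M /\ homogeneous d /\ dist_set_is d D /\ D_universal_space d D.

Definition universal (D : list R) : Prop :=
  exists (M : Type) (d : M -> M -> R), in_U_D d D.

(* t, restricted to the finite domain A, is a Katetov function of (M,d) with values in D \ {0}. *)
Definition katetov {M : Type} (d : M -> M -> R) (D : list R) (A : list M) (t : M -> R) : Prop :=
  (forall x, In x A -> In (t x) D /\ t x <> 0) /\
  (forall x y, In x A -> In y A -> Rabs (t x - t y) <= d x y /\ d x y <= t x + t y).

Definition orb {M : Type} (d : M -> M -> R) (A : list M) (t : M -> R) (y : M) : Prop :=
  ~ In y A /\ forall x, In x A -> d y x = t x.

Definition is_dmin {M : Type} (d : M -> M -> R) (A : list M) (s t : M -> R) (r : R) : Prop :=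
  (exists x y, orb d A s x /\ orb d A t y /\ d x y = r) /\
  (forall x y, orb d A s x -> orb d A t y -> r <= d x y).

(* Main.v *)
Require Import Defs.
From Stdlib Require Import Reals List Lra.
Import ListNotations.
Open Scope R_scope.

Theorem lemma6p1 (D : list R) (hD : distance_set D) (hU : universal D)
  (M : Type) (d : M -> M -> R) (hM : in_U_D d D) (A : list M)
  (p0 p1 p2 : M -> R)
  (k0 : katetov d D A p0) (k1 : katetov d D A p1) (k2 : katetov d D A p2)
  (r12 r01 r02 : R)
  (h12 : is_dmin d A p1 p2 r12) (h01 : is_dmin d A p0 p1 r01) (h02 : is_dmin d A p0 p2 r02) :
  r12 <= r01 + r02.
Proof.
  destruct hM as [[Hz [Hsym Htri]] [_ [Hhom _]]].
  destruct h01 as [[x0 [x1 [Ox0 [Ox1 Ed01]]]] _].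
  destruct h02 as [[y0 [y2 [Oy0 [Oy2 Ed02]]]] _].
  destruct h12 as [_ Hmin].
  destruct (Hhom ((y0, x0) :: map (fun a => (a, a)) A)) as [g [Giso [_ Gmap]]].
  { intros p q Hp Hq.
    destruct Hp as [Hp|Hp]; destruct Hq as [Hq|Hq].
    - subst; simpl. rewrite (proj2 (Hz y0 y0) eq_refl), (proj2 (Hz x0 x0) eq_refl). reflexivity.
    - subst; simpl. apply in_map_iff in Hq as [a [Ha HaA]]. subst; simpl.
      rewrite (proj2 Ox0 a HaA), (proj2 Oy0 a HaA). reflexivity.
    - subst; simpl. apply in_map_iff in Hp as [a [Ha HaA]]. subst; simpl.
      rewrite (Hsym a y0), (Hsym a x0), (proj2 Ox0 a HaA), (proj2 Oy0 a HaA). reflexivity.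
    - apply in_map_iff in Hp as [a [Ha HaA]]. apply in_map_iff in Hq as [b [Hb HbA]].
      subst; reflexivity. }
  assert (Gy0 : g y0 = x0) by exact (Gmap (y0, x0) (or_introl eq_refl)).
  assert (GA : forall a, In a A -> g a = a).
  { intros a Ha. exact (Gmap (a, a) (or_intror (in_map (fun a => (a, a)) A a Ha))). }
  assert (Og : orb d A p2 (g y2)).
  { split.
    - intro Hin. apply (proj1 Oy2).
      assert (g y2 = g (g y2)) by (symmetry; apply GA; exact Hin).
      assert (d y2 (g y2) = 0).
      { rewrite <- Giso, <- H. apply (proj2 (Hz _ _)); reflexivity. }
      apply (proj1 (Hz _ _)) in H0. rewrite H0. exact Hin.
    - intros a Ha. rewrite <- (GA a Ha) at 1. rewrite Giso. apply (proj2 Oy2 a Ha). }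
  assert (H1 : r12 <= d x1 (g y2)) by (apply Hmin; assumption).
  assert (H2 : d x1 (g y2) <= d x1 x0 + d x0 (g y2)) by apply Htri.
  rewrite (Hsym x1 x0), Ed01, <- Gy0, Giso, Ed02 in H2. lra.
Qed.
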